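(* Let $d\ge1$ be an integer, $C>1$ real, and $\rho$ a growth function with $\rho(x)\ge x$ and $\rho(x)\le Cx^d$ for all $x\ge1$. Let $m\ge1$ and $0\le k\le m$ be integers and $\sigma\in\{-1,1\}^m$ with $|\sigma|=k$ and $\operatorname{disc}(\sigma)\ge0$. If $(a,b)=f^\rho_\sigma$, then $$0\le b=2k-m\le k\quad\text{and}\quad 0\le a\le\tau^\rho_{m-k}(k,k)\le(2C)^{(m-k)d^{m-k}}(2k)^{d^{m-k}}.$$
   Context: A growth function is an increasing $\rho:\mathbb{R}\to\mathbb{R}^{\ge0}$. Binary strings are elements of $\{-1,1\}^m$ (the empty string $<>$ for $m=0$); $|\sigma|$ is the number of coordinates equal to $1$; $\operatorname{disc}(\sigma)=\sum_i\sigma_i$; $\sigma\wedge u$ denotes concatenation. $f^\rho_\sigma\in\mathbb{R}^2$ is defined recursively: $f^\rho_{<>}=(0,0)$, and if $f^\rho_\sigma=(a,b)$ then $f^\rho_{\sigma\wedge1}=(a+1,b+1)$ and $f^\rho_{\sigma\wedge-1}=(a+\rho(a+b),b-1)$. The functions $\tau^\rho_i:\mathbb{Z}^2\to\mathbb{R}$ are $\tau^\rho_0(x,y)=x$, $\tau^\rho_{i+1}(x,y)=\tau^\rho_i(x,y)+\rho(\tau^\rho_i(x,y)+y-i)$. *)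

(* Defs.v *)
From Stdlib Require Import Reals Lra Lia List ZArith.
Import ListNotations.
Open Scope R_scope.

(* A growth function: increasing (read as non-decreasing) and nonnegative. *)
Definition growth_function (rho : R -> R) : Prop :=
  (forall x y, x <= y -> rho x <= rho y) /\ (forall x, 0 <= rho x).

Definition is_binary_string (s : list Z) : Prop :=
  Forall (fun u => u = 1%Z \/ u = (-1)%Z) s.

Definition ones (s : list Z) : nat :=
  List.length (filter (fun u => Z.eqb u 1) s).

Definition discrepancy (s : list Z) : Z := fold_right Z.add 0%Z s.

Definition f_step (rho : R -> R) (p : R * R) (u : Z) : R * R :=
  let (a, b) := p in
  if Z.eqb u 1 then (a + 1, b + 1) else (a + rho (a + b), b - 1).

Definition f_rho (rho : R -> R) (s : list Z) : R * R :=
  fold_left (f_step rho) s (0, 0).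

Fixpoint tau (rho : R -> R) (i : nat) (x y : Z) : R :=
  match i with
  | O => IZR x
  | S j => tau rho j x y + rho (tau rho j x y + IZR y - INR j)
  end.

(* Main.v *)
Require Import Defs.
From Stdlib Require Import Reals List ZArith Lra Lia.
Open Scope R_scope.

Fixpoint TT (rho : R -> R) (n : nat) (x y : R) : R :=
  match n with O => x | S n => TT rho n (x + rho (x + y)) (y - 1) end.

Lemma TT_mono rho n : growth_function rho -> forall x x' y, x <= x' -> TT rho n x y <= TT rho n x' y.
Proof.
  intros [Hm _]. induction n; intros x x' y H; simpl; auto.
  apply IHn. assert (rho (x + y) <= rho (x' + y)) by (apply Hm; lra). lra.
Qed.

Lemma TT_S rho n : forall x y, TT rho (S n) x y = TT rho n x y + rho (TT rho n x y + y - INR n).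
Proof.
  induction n; intros x y.
  - simpl. replace (x + y - 0) with (x + y) by lra. reflexivity.
  - change (TT rho (S (S n)) x y) with (TT rho (S n) (x + rho (x + y)) (y - 1)).
    rewrite IHn. change (TT rho (S n) x y) with (TT rho n (x + rho (x + y)) (y - 1)).
    rewrite S_INR. f_equal. f_equal. lra.
Qed.

Lemma tau_TT rho n x y : tau rho n x y = TT rho n (IZR x) (IZR y).
Proof.
  induction n; [reflexivity|]. cbn [tau]. rewrite TT_S, IHn. reflexivity.
Qed.

Lemma ones_le s : (ones s <= length s)%nat.
Proof.
  unfold ones. induction s; simpl; auto. destruct (Z.eqb a 1); simpl; lia.
Qed.

Lemma gen rho : growth_function rho -> forall s a0 b0 a b, is_binary_string s ->
  fold_left (f_step rho) s (a0, b0) = (a, b) ->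
  b = b0 + INR (ones s) - INR (length s - ones s) /\ a0 <= a /\
  a <= TT rho (length s - ones s) (a0 + INR (ones s)) (b0 + INR (ones s)).
Proof.
  intros Hg. pose proof Hg as [Hm Hp].
  induction s as [|u s IH]; intros a0 b0 a b Hb Hf.
  - simpl in Hf. inversion Hf. simpl. repeat split; lra.
  - inversion Hb as [|? ? Hu Hs]; subst. pose proof (ones_le s) as Hle.
    destruct Hu as [-> | ->]; simpl in Hf.
    + destruct (IH _ _ _ _ Hs Hf) as (H1 & H2 & H3).
      change (ones (1%Z :: s)) with (S (ones s)).
      change (length (1%Z :: s)) with (S (length s)). rewrite S_INR.
      replace (S (length s) - S (ones s))%nat with (length s - ones s)%nat by lia.
      split; [lra|split; [lra|]].
      replace (a0 + (INR (ones s) + 1)) with (a0 + 1 + INR (ones s)) by lra.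
      replace (b0 + (INR (ones s) + 1)) with (b0 + 1 + INR (ones s)) by lra. exact H3.
    + destruct (IH _ _ _ _ Hs Hf) as (H1 & H2 & H3).
      change (ones ((-1)%Z :: s)) with (ones s).
      change (length ((-1)%Z :: s)) with (S (length s)).
      set (o := ones s) in *.
      replace (S (length s) - o)%nat with (S (length s - o)) by lia.
      pose proof (pos_INR o).
      assert (rho (a0 + b0) <= rho (a0 + INR o + (b0 + INR o))) by (apply Hm; lra).
      pose proof (Hp (a0 + b0)).
      split; [rewrite S_INR; lra|split; [lra|]].
      cbn [TT]. eapply Rle_trans; [exact H3|].
      replace (b0 - 1 + INR o) with (b0 + INR o - 1) by lra.
      apply TT_mono; auto. lra.
Qed.

Lemma disc_eq s : is_binary_string s ->
  discrepancy s = (Z.of_nat (ones s) - Z.of_nat (length s - ones s))%Z.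
Proof.
  induction s as [|u s IH]; intros Hb; [reflexivity|].
  inversion Hb as [|? ? Hu Hs]; subst. pose proof (ones_le s).
  change (discrepancy (u :: s)) with (u + discrepancy s)%Z.
  rewrite IH by auto.
  destruct Hu as [-> | ->].
  - change (ones (1%Z :: s)) with (S (ones s)).
    change (length (1%Z :: s)) with (S (length s)). lia.
  - change (ones ((-1)%Z :: s)) with (ones s).
    change (length ((-1)%Z :: s)) with (S (length s)). lia.
Qed.

Lemma bound rho d C (k : nat) : (1 <= d)%nat -> 1 < C -> growth_function rho ->
  (forall x, 1 <= x -> rho x <= C * x ^ d) -> (1 <= k)%nat ->
  forall i, (i <= k)%nat ->
  INR k <= tau rho i (Z.of_nat k) (Z.of_nat k) /\
  tau rho i (Z.of_nat k) (Z.of_nat k) + INR k <=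
    (2 * C) ^ (i * d ^ i) * (2 * INR k) ^ (d ^ i).
Proof.
  intros Hd HC [Hm Hp] Hr Hk. pose proof (pos_INR k) as HK0.
  assert (HK1 : 1 <= INR k) by (apply (le_INR 1); auto).
  induction i; intros Hi.
  - cbn [tau]. rewrite <- INR_IZR_INZ. rewrite Nat.mul_0_l, Nat.pow_0_r, pow_O, pow_1. lra.
  - destruct IHi as [H1 H2]; [lia|].
    simpl tau. set (t := tau rho i (Z.of_nat k) (Z.of_nat k)) in *.
    rewrite <- INR_IZR_INZ.
    assert (Hik : INR i + 1 <= INR k) by (rewrite <- S_INR; apply le_INR; lia).
    pose proof (pos_INR i).
    pose proof (Hp (t + INR k - INR i)).
    pose (u := t + INR k). assert (Hu : u = t + INR k) by reflexivity. clearbody u.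
    assert (Hr1 : rho (t + INR k - INR i) <= C * u ^ d).
    { eapply Rle_trans; [apply Hr; lra|]. apply Rmult_le_compat_l; [lra|].
      apply pow_incr; split; lra. }
    assert (Hud : u <= u ^ d).
    { destruct d; [lia|]. simpl. pose proof (pow_R1_Rle u d ltac:(lra)).
      replace u with (u * 1) at 1 by lra. apply Rmult_le_compat_l; lra. }
    set (B := (2 * C) ^ (i * d ^ i) * (2 * INR k) ^ d ^ i) in *.
    assert (HuB : u ^ d <= B ^ d) by (apply pow_incr; split; lra).
    assert (Hstep : t + rho (t + INR k - INR i) + INR k <= 2 * C * B ^ d).
    { assert (u ^ d >= 0) by (apply Rle_ge, pow_le; lra). nra. }
    split; [lra|]. eapply Rle_trans; [exact Hstep|].
    replace (S i * d ^ S i)%nat with (d ^ S i + (i * d ^ i) * d)%nat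
      by (rewrite Nat.pow_succ_r'; ring).
    replace (d ^ S i)%nat with (d ^ i * d)%nat at 2 by (rewrite Nat.pow_succ_r'; ring).
    rewrite pow_add, !pow_mult. unfold B. rewrite Rpow_mult_distr.
    assert (H2C : 2 * C <= (2 * C) ^ (d ^ S i)).
    { rewrite <- (pow_1 (2*C)) at 1. apply Rle_pow; [lra|].
      pose proof (Nat.pow_le_mono_l 1 d (S i) Hd). rewrite Nat.pow_1_l in H3. lia. }
    assert (0 <= ((2 * C) ^ (i * d ^ i)) ^ d * ((2 * INR k) ^ d ^ i) ^ d).
    { apply Rmult_le_pos; apply pow_le; apply pow_le; lra. }
    rewrite <- (pow_mult (2*C) i (d ^ i)). rewrite (Rmult_assoc ((2*C)^(d^S i))).
    apply Rmult_le_compat_r; lra.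
Qed.

Theorem mainTheorem18 (d : nat) (C : R) (rho : R -> R)
  (m k : nat) (sigma : list Z) (a b : R) :
  (1 <= d)%nat -> 1 < C -> growth_function rho ->
  (forall x, 1 <= x -> x <= rho x) ->
  (forall x, 1 <= x -> rho x <= C * x ^ d) ->
  (1 <= m)%nat -> (k <= m)%nat ->
  is_binary_string sigma -> (List.length sigma = m)%nat ->
  (ones sigma = k)%nat -> (0 <= discrepancy sigma)%Z ->
  f_rho rho sigma = (a, b) ->
  (0 <= b /\ b = 2 * INR k - INR m /\ b <= INR k) /\
  (0 <= a /\ a <= tau rho (m - k) (Z.of_nat k) (Z.of_nat k) /\
   tau rho (m - k) (Z.of_nat k) (Z.of_nat k)
     <= (2 * C) ^ ((m - k) * d ^ (m - k)) * (2 * INR k) ^ (d ^ (m - k))).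
Proof.
  intros Hd HC Hg Hge Hr Hm Hkm Hb Hl Ho Hdisc Hf.
  rewrite (disc_eq _ Hb), Hl, Ho in Hdisc.
  assert (Hjk : (m - k <= k)%nat) by lia.
  assert (Hk1 : (1 <= k)%nat) by lia.
  destruct (gen rho Hg sigma 0 0 a b Hb Hf) as (H1 & H2 & H3).
  rewrite Hl, Ho in H1, H3.
  rewrite minus_INR in H1 by lia.
  pose proof (le_INR _ _ Hjk) as Hjk'. rewrite minus_INR in Hjk' by lia.
  pose proof (pos_INR k). pose proof (le_INR _ _ Hkm).
  destruct (bound rho d C k Hd HC Hg Hr Hk1 (m - k) Hjk) as [B1 B2].
  split; [split; [lra|split; lra]|].
  split; [lra|split].
  - rewrite tau_TT, <- INR_IZR_INZ.
    replace (INR k) with (0 + INR k) at 1 2 by lra. exact H3.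
  - lra.
Qed.
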